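(* Let $m\ge 1$ and let $L$ be either $L'$ or $\mathcal{R}^*$ (notation as in the context). If $a\in\mathcal{R}$ satisfies $Tr(ax)=0$ for all $x\in L$, then $a=0$.
   Context: Let $R=\mathbb{F}_3+u\mathbb{F}_3+u^2\mathbb{F}_3$ with $u^3=1$, i.e. $R=\mathbb{F}_3[u]/(u^3-1)$. For a positive integer $m$, let $\mathcal{R}=\mathbb{F}_{3^m}+u\mathbb{F}_{3^m}+u^2\mathbb{F}_{3^m}=\mathbb{F}_{3^m}[u]/(u^3-1)$. Every element of $\mathcal{R}$ can be written uniquely as $x_1+x_2(u-1)+x_3(u-1)^2$ with $x_1,x_2,x_3\in\mathbb{F}_{3^m}$; it is a unit iff $x_1\neq 0$, and $\mathcal{R}^*$ denotes the group of units. Define $Tr:\mathcal{R}\to R$ by $Tr(a+ub+u^2c)=tr(a)+u\,tr(b)+u^2tr(c)$ for $a,b,c\in\mathbb{F}_{3^m}$, where $tr$ is the absolute trace from $\mathbb{F}_{3^m}$ to $\mathbb{F}_3$. Let $\mathcal{Q}$ be the set of nonzero squares of $\mathbb{F}_{3^m}$ and $L'=\{x_1+x_2(u-1)+x_3(u-1)^2: x_1\in\mathcal{Q},\ x_2,x_3\in\mathbb{F}_{3^m}\}$, a subgroup of index $2$ of $\mathcal{R}^*$. *)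

(* Defs.v *)
From HB Require Import structures.
From mathcomp Require Import all_boot all_order all_algebra all_field.
Set Implicit Arguments. Unset Strict Implicit. Unset Printing Implicit Defensive.
Import GRing.Theory.
Local Open Scope ring_scope.

(* The ring  calR = F[u]/(u^3 - 1), F = F_{3^m}; an element  a + u b + u^2 c
   is represented by the triple (a, b, c). *)
Definition calR (F : finFieldType) := (F * F * F)%type.

Definition mkR (F : finFieldType) (a b c : F) : calR F := (a, b, c).
Definition c0 (F : finFieldType) (x : calR F) : F := x.1.1.
Definition c1 (F : finFieldType) (x : calR F) : F := x.1.2.
Definition c2 (F : finFieldType) (x : calR F) : F := x.2.

Definition zeroR (F : finFieldType) : calR F := mkR 0 0 0.
Definition oneR (F : finFieldType) : calR F := mkR 1 0 0.
Definition uR (F : finFieldType) : calR F := mkR 0 1 0.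
Definition addR (F : finFieldType) (x y : calR F) : calR F :=
  mkR (c0 x + c0 y) (c1 x + c1 y) (c2 x + c2 y).
Definition scaleR (F : finFieldType) (k : F) (x : calR F) : calR F :=
  mkR (k * c0 x) (k * c1 x) (k * c2 x).
(* multiplication using u^3 = 1 *)
Definition mulR (F : finFieldType) (x y : calR F) : calR F :=
  mkR (c0 x * c0 y + c1 x * c2 y + c2 x * c1 y)
      (c0 x * c1 y + c1 x * c0 y + c2 x * c2 y)
      (c0 x * c2 y + c1 x * c1 y + c2 x * c0 y).

Definition uMinus1 (F : finFieldType) : calR F := addR (uR F) (scaleR (-1) (oneR F)).
Definition ofU1 (F : finFieldType) (x1 x2 x3 : F) : calR F :=
  addR (scaleR x1 (oneR F))
   (addR (scaleR x2 (uMinus1 F)) (scaleR x3 (mulR (uMinus1 F) (uMinus1 F)))).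

Definition unitR (F : finFieldType) (x : calR F) : Prop :=
  exists y : calR F, mulR x y = oneR F.

Definition nzsquare (F : finFieldType) (x : F) : Prop :=
  exists y : F, y != 0 /\ x = y ^+ 2.

Definition Lprime (F : finFieldType) (x : calR F) : Prop :=
  exists x1 x2 x3 : F, nzsquare x1 /\ x = ofU1 x1 x2 x3.

(* absolute trace F_{3^m} -> F_3, with values viewed inside F
   (the prime subfield F_3 of F) *)
Definition trF (F : finFieldType) (m : nat) (x : F) : F :=
  \sum_(i < m) x ^+ (3 ^ i).

(* Tr : calR -> R = F_3[u]/(u^3-1), with R viewed as a subring of calR *)
Definition TrR (F : finFieldType) (m : nat) (x : calR F) : calR F :=
  mkR (trF m (c0 x)) (trF m (c1 x)) (trF m (c2 x)).

(* Main.v *)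
Require Import Defs.
From mathcomp Require Import all_boot all_order all_algebra all_field.
From mathcomp Require Import zify.
Local Open Scope ring_scope.
Import GRing.Theory.

Lemma key (F : finFieldType) (m : nat) (hm : (1 <= m)%N)
  (hF : #|F| = (3 ^ m)%N) (b : F) :
  (forall y : F, trF m (y ^+ 2 * b) = 0) -> b = 0.
Proof.
move=> H; apply/eqP; apply/negPn/negP => bn0.
case: m hm hF H => // n _ hF H.
pose p : {poly F} := \sum_(i < n.+1) (b ^+ (3 ^ i)) *: 'X^(2 * 3 ^ i).
have hroot : forall y, p.[y] = trF n.+1 (y ^+ 2 * b).
  move=> y; rewrite /p horner_sum /trF; apply: eq_bigr => i _.
  by rewrite hornerZ hornerXn exprMn -exprM mulrC.
have hsize : (size p <= (2 * 3 ^ n).+1)%N.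
  apply: leq_trans (size_sum _ _ _) _; apply/bigmax_leqP => i _.
  apply: leq_trans (size_scale_leq _ _) _; rewrite size_polyXn ltnS leq_mul2l /=.
  by rewrite leq_pexp2l // -ltnS.
have hcoef : p`_(2 * 3 ^ n) = b ^+ (3 ^ n).
  rewrite /p coef_sum (bigD1 ord_max) //= coefZ coefXn eqxx mulr1 big1 ?addr0 //.
  move=> i /eqP hi; rewrite coefZ coefXn eqn_pmul2l // eqn_exp2l //.
  have : nat_of_ord i != n by apply/eqP => e; apply: hi; apply: val_inj.
  by rewrite eq_sym => /negPf->; rewrite mulr0.
have pn0 : p != 0.
  apply/eqP => p0; move: hcoef; rewrite p0 coef0 => /esym/eqP.
  by rewrite expf_eq0 (negPf bn0) andbF.
have hall : all (root p) (enum F) by apply/allP => y _; rewrite /root hroot H.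
have := max_poly_roots pn0 hall (enum_uniq F); rewrite -cardE hF expnS => h.
have k0 : (0 < 3 ^ n)%N by rewrite expn_gt0.
move: h hsize k0; set k := (3 ^ n)%N; set s := size p; lia.
Qed.

Lemma trF0 (F : finFieldType) m : trF m (0 : F) = 0.
Proof. by rewrite /trF big1 // => i _; rewrite expr0n expn_eq0. Qed.

Theorem lemma3p1 (F : finFieldType) (m : nat) (hm : (1 <= m)%N)
  (hF : #|F| = (3 ^ m)%N) (useLprime : bool) (a : calR F) :
  (forall x : calR F,
     (if useLprime then Lprime x else unitR x) ->
     TrR m (mulR a x) = zeroR F) ->
  a = zeroR F.
Proof.
move=> H.
have Hy : forall y : F, TrR m (mulR a (mkR (y ^+ 2) 0 0)) = zeroR F.
  move=> y; case: (eqVneq y 0) => [->|yn0].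
    by rewrite /TrR /mulR /c0 /c1 /c2 /mkR /= expr0n /= !mulr0 !addr0 trF0.
  apply: H; case: useLprime.
    exists (y ^+ 2), 0, 0; split; first by exists y.
    rewrite /ofU1 /addR /scaleR /c0 /c1 /c2 /mkR /=.
    by rewrite !mul0r !mulr0 !mulr1 !addr0.
  exists (mkR (y ^+ 2)^-1 0 0).
  rewrite /mulR /c0 /c1 /c2 /mkR /oneR /= !mulr0 !mul0r !addr0 mulfV //.
  by rewrite expf_eq0 (negPf yn0) andbF.
case: a H Hy => [[a0 a1] a2] _ Hy.
have Hc : forall y : F, [/\ trF m (y ^+ 2 * a0) = 0, trF m (y ^+ 2 * a1) = 0
                          & trF m (y ^+ 2 * a2) = 0].
  move=> y; have := Hy y.
  rewrite /TrR /mulR /zeroR /c0 /c1 /c2 /mkR /= !mulr0 !addr0 !add0r => -[h0 h1 h2].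
  by split; rewrite mulrC.
have e0 : a0 = 0 by apply: (@key F m hm hF) => y; case: (Hc y).
have e1 : a1 = 0 by apply: (@key F m hm hF) => y; case: (Hc y).
have e2 : a2 = 0 by apply: (@key F m hm hF) => y; case: (Hc y).
by rewrite e0 e1 e2.
Qed.
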